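(* Let $K\ge 2$, let $L_1,\dots,L_K:\mathbb{R}^d\to\mathbb{R}$ be twice differentiable, and let $\mu>0$, $\rho,\delta\ge 0$. Assume every $L_k$ is $\mu$-smooth and $\rho$-Hessian Lipschitz. Let $\widehat{w}_1,\dots,\widehat{w}_{K-1}\in\mathbb{R}^d$ and let $H_1,\dots,H_{K-1}$ be symmetric $d\times d$ matrices with $\|H_k\|_2\le\mu$ and $\|H_k-\nabla^2L_k(\widehat{w}_k)\|_2\le\delta$ for all $k\in[K-1]$. Define \[ \widetilde{L}_{K-1}(w)=\sum_{k=1}^{K-1}\Big(L_k(\widehat{w}_k)+(w-\widehat{w}_k)^\top\nabla L_k(\widehat{w}_k)+\tfrac12(w-\widehat{w}_k)^\top H_k(w-\widehat{w}_k)\Big), \] $\widetilde{F}(w)=\frac1K\big(\widetilde{L}_{K-1}(w)+L_K(w)\big)$ and $F(w)=\frac1K\sum_{k=1}^K L_k(w)$. Let $\mathcal{W}\subseteq\mathbb{R}^d$, and suppose $F^*:=\min_{w\in\mathcal{W}}F(w)$ and $\widetilde{F}^*:=\min_{w\in\mathcal{W}}\widetilde{F}(w)$ exist. Let $w_0=\widehat{w}_{K-1}$ and run $T$ iterations of $w_t=w_{t-1}-\eta\nabla\widetilde{F}(w_{t-1})$ with $\eta=1/\mu$, the iterates lying in $\mathcal{W}$. Put $F_0=F(w_0)$, $\widetilde{F}_0=\widetilde{F}(w_0)$. Then \[ \frac1T\sum_{t=1}^T\|\nabla F(w_{t-1})\|_2\le\frac{\alpha}{\sqrt T}+\beta+\gamma_1\sqrt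 T+\gamma_2 T, \] where $\alpha=\sqrt{2\mu(F_0-F^* )}$, $\beta=\frac{\sqrt3}{K}\sum_{k=1}^{K-2}\big(\delta\|w_0-\widehat{w}_k\|_2+2\rho\|w_0-\widehat{w}_k\|_2^2\big)$, $\gamma_1=\delta\sqrt{\frac3\mu(\widetilde{F}_0-\widetilde{F}^* )}$, and $\gamma_2=\frac{4\rho}{\mu}(\widetilde{F}_0-\widetilde{F}^* )$.
   Context: $\|\cdot\|_2$ denotes the Euclidean norm for vectors and the operator norm for matrices; $[N]=\{1,\dots,N\}$. A differentiable $f$ is $\mu$-smooth if $\|\nabla f(w)-\nabla f(w')\|_2\le\mu\|w-w'\|_2$ for all $w,w'$, and $\rho$-Hessian Lipschitz if $\|\nabla^2 f(w)-\nabla^2 f(w')\|_2\le\rho\|w-w'\|_2$ for all $w,w'$. No convexity is assumed. *)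

(* Defs.v *)
From HB Require Import structures.
From mathcomp Require Import all_boot all_order all_algebra.
From mathcomp Require Import all_classical all_reals all_analysis.
Set Implicit Arguments. Unset Strict Implicit. Unset Printing Implicit Defensive.
Import Order.TTheory GRing.Theory Num.Theory.
Import numFieldNormedType.Exports.
Local Open Scope ring_scope.
Local Open Scope classical_set_scope.

Section Defs.
Variable (R : realType) (d : nat).

Definition enorm (v : 'cV[R]_d) : R := Num.sqrt (\sum_i (v i 0) ^+ 2).

Definition opnorm (A : 'M[R]_d) : R :=
  sup [set enorm (A *m x) | x in [set x : 'cV[R]_d | enorm x <= 1]].

Definition ebasis (i : 'I_d) : 'cV[R]_d := delta_mx i 0.

Definition dotv (u v : 'cV[R]_d) : R := (u^T *m v) 0 0.

Definition grad (f : 'cV[R]_d -> R) (w : 'cV[R]_d) : 'cV[R]_d :=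
  \col_i ('D_(ebasis i) f w).

Definition hess (f : 'cV[R]_d -> R) (w : 'cV[R]_d) : 'M[R]_d :=
  \matrix_(i, j) ('D_(ebasis j) (fun u => grad f u i 0) w).

Definition twice_differentiable (f : 'cV[R]_d -> R) : Prop :=
  (forall w, differentiable f w) /\ (forall w, differentiable (grad f) w).

Definition smooth_const (mu : R) (f : 'cV[R]_d -> R) : Prop :=
  forall w w', enorm (grad f w - grad f w') <= mu * enorm (w - w').

Definition hess_lipschitz (rho : R) (f : 'cV[R]_d -> R) : Prop :=
  forall w w', opnorm (hess f w - hess f w') <= rho * enorm (w - w').

End Defs.

(* Main.v *)
Require Import Defs.
From HB Require Import structures.
From mathcomp Require Import all_boot all_order all_algebra.
From mathcomp Require Import all_classical all_reals all_analysis.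
From mathcomp Require Import ring lra.
Import Order.TTheory GRing.Theory Num.Theory.
Import numFieldNormedType.Exports.
Local Open Scope ring_scope.
Local Open Scope classical_set_scope.
Set Implicit Arguments. Unset Strict Implicit. Unset Printing Implicit Defensive.
Section Vec.
Variables (R : realType) (d : nat).
Implicit Types (u v x y : 'cV[R]_d) (A : 'M[R]_d).

Lemma dotvE u v : dotv u v = \sum_i u i 0 * v i 0.
Proof. by rewrite /dotv !mxE; apply: eq_bigr => i _; rewrite mxE. Qed.

Lemma dotvC u v : dotv u v = dotv v u.
Proof. by rewrite !dotvE; apply: eq_bigr => i _; rewrite mulrC. Qed.

Lemma dotvDl u v x : dotv (u + v) x = dotv u x + dotv v x.
Proof. by rewrite !dotvE -big_split; apply: eq_bigr => i _; rewrite mxE mulrDl. Qed.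

Lemma dotvDr u v x : dotv x (u + v) = dotv x u + dotv x v.
Proof. by rewrite dotvC dotvDl !(dotvC x). Qed.

Lemma dotvZl (c : R) u v : dotv (c *: u) v = c * dotv u v.
Proof. by rewrite !dotvE mulr_sumr; apply: eq_bigr => i _; rewrite mxE mulrA. Qed.

Lemma dotvZr (c : R) u v : dotv u (c *: v) = c * dotv u v.
Proof. by rewrite dotvC dotvZl dotvC. Qed.

Lemma dotvNl u v : dotv (- u) v = - dotv u v.
Proof. by rewrite -scaleN1r dotvZl mulN1r. Qed.

Lemma dotvNr u v : dotv u (- v) = - dotv u v.
Proof. by rewrite dotvC dotvNl dotvC. Qed.

Lemma dotvBl u v x : dotv (u - v) x = dotv u x - dotv v x.
Proof. by rewrite dotvDl dotvNl. Qed.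

Lemma dotvBr u v x : dotv x (u - v) = dotv x u - dotv x v.
Proof. by rewrite dotvDr dotvNr. Qed.

Lemma dotv0l v : dotv 0 v = 0.
Proof. by rewrite dotvE big1 // => i _; rewrite mxE mul0r. Qed.

Lemma dotv_suml (I : Type) (r : seq I) (P : pred I) (f : I -> 'cV[R]_d) v :
  dotv (\sum_(i <- r | P i) f i) v = \sum_(i <- r | P i) dotv (f i) v.
Proof.
elim/big_rec2: _ => [|i a b Pi <-]; first exact: dotv0l.
by rewrite dotvDl.
Qed.

Lemma dotv_sumr (I : Type) (r : seq I) (P : pred I) (f : I -> 'cV[R]_d) v :
  dotv v (\sum_(i <- r | P i) f i) = \sum_(i <- r | P i) dotv v (f i).
Proof. by rewrite dotvC dotv_suml; apply: eq_bigr => i _; rewrite dotvC. Qed.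

Lemma dotv_ebasis i u : dotv (ebasis R i) u = u i 0.
Proof.
rewrite dotvE (bigD1 i) //= big1 ?addr0; first by rewrite /ebasis mxE !eqxx mul1r.
by move=> j ji; rewrite /ebasis mxE (negPf ji) mul0r.
Qed.

Lemma dotv_sym_mx A u v : A^T = A -> dotv u (A *m v) = dotv v (A *m u).
Proof.
move=> sA; rewrite /dotv; have -> : v^T *m (A *m u) = (u^T *m (A *m v))^T.
  by rewrite !trmx_mul sA trmxK mulmxA.
by case: (u^T *m (A *m v)) => M; rewrite !mxE.
Qed.

Lemma dotv_ge0 v : 0 <= dotv v v.
Proof. by rewrite dotvE; apply: sumr_ge0 => i _; rewrite -expr2 sqr_ge0. Qed.

Lemma enormE v : enorm v = Num.sqrt (dotv v v).
Proof. by rewrite /enorm dotvE; congr Num.sqrt; apply: eq_bigr => i _; rewrite expr2. Qed.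

Lemma enorm_ge0 v : 0 <= enorm v.
Proof. exact: sqrtr_ge0. Qed.

Lemma enorm_sq v : enorm v ^+ 2 = dotv v v.
Proof. by rewrite enormE sqr_sqrtr // dotv_ge0. Qed.

Lemma enorm_eq0 v : enorm v = 0 -> v = 0.
Proof.
rewrite /enorm => /eqP; rewrite sqrtr_eq0 => H.
have H0 : \sum_i v i 0 ^+ 2 = 0.
  by apply/le_anti; rewrite H /=; apply: sumr_ge0 => i _; exact: sqr_ge0.
apply/matrixP => i j; rewrite (ord1 j) mxE.
have /psumr_eq0P := H0; move=> /(_ (fun i _ => sqr_ge0 _) i isT) /eqP.
by rewrite sqrf_eq0 => /eqP.
Qed.

Lemma enorm0 : enorm (0 : 'cV[R]_d) = 0.
Proof. by rewrite enormE dotv0l sqrtr0. Qed.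

Lemma enormZ (c : R) v : enorm (c *: v) = `|c| * enorm v.
Proof.
by rewrite !enormE dotvZl dotvZr mulrA -expr2 sqrtrM ?sqr_ge0 // sqrtr_sqr.
Qed.

Lemma enormN v : enorm (- v) = enorm v.
Proof. by rewrite -scaleN1r enormZ normrN1 mul1r. Qed.

Lemma enormB u v : enorm (u - v) = enorm (v - u).
Proof. by rewrite -enormN opprB. Qed.

Lemma CS u v : dotv u v <= enorm u * enorm v.
Proof.
set a := enorm u; set b := enorm v.
have [a0|] := eqVneq a 0.
  by rewrite (enorm_eq0 a0) dotv0l a0 mul0r.
have [b0|] := eqVneq b 0.
  by rewrite (enorm_eq0 b0) dotvC dotv0l b0 mulr0.
move=> bn0 an0.
have ha : 0 < a by rewrite lt_def an0 enorm_ge0.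
have hb : 0 < b by rewrite lt_def bn0 enorm_ge0.
have := dotv_ge0 (b *: u - a *: v).
rewrite !dotvBl !dotvBr !dotvZl !dotvZr -!enorm_sq -/a -/b (dotvC v u).
move=> H.
have : 2 * (a * b) * dotv u v <= 2 * (a * b) * (a * b) by nra.
by rewrite ler_pM2l // mulr_gt0 // mulr_gt0.
Qed.

Lemma CSabs u v : `|dotv u v| <= enorm u * enorm v.
Proof.
rewrite ler_norml CS andbT lerNl -dotvNl.
by apply: le_trans (CS _ _) _; rewrite enormN.
Qed.

Lemma enormD u v : enorm (u + v) <= enorm u + enorm v.
Proof.
rewrite [X in X <= _]enormE -(@ger0_norm _ (enorm u + enorm v)); last first.
  by rewrite addr_ge0 // enorm_ge0.
rewrite -sqrtr_sqr ler_wsqrtr //.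
rewrite dotvDl !dotvDr (dotvC v u) sqrrD -!enorm_sq.
have := CS u v; lra.
Qed.

Lemma enorm_sum (I : Type) (r : seq I) (P : pred I) (f : I -> 'cV[R]_d) :
  enorm (\sum_(i <- r | P i) f i) <= \sum_(i <- r | P i) enorm (f i).
Proof.
elim/big_rec2: _ => [|i a b Pi H]; first by rewrite enorm0.
by apply: le_trans (enormD _ _) _; rewrite lerD2l.
Qed.

Lemma enorm_ebasis (i : 'I_d) : enorm (ebasis R i) = 1.
Proof. by rewrite enormE dotv_ebasis /ebasis mxE !eqxx sqrtr1. Qed.

Lemma colE v : v = \sum_i v i 0 *: ebasis R i.
Proof.
apply/matrixP => i j; rewrite (ord1 j) summxE (bigD1 i) //= big1 ?addr0.
  by rewrite !mxE !eqxx mulr1.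
by move=> k ki; rewrite !mxE eq_sym (negPf ki) mulr0.
Qed.

Lemma enorm_le_l1 v : enorm v <= \sum_i `|v i 0|.
Proof.
rewrite {1}(colE v); apply: le_trans (enorm_sum _ _ _) _.
by apply: ler_sum => i _; rewrite enormZ enorm_ebasis mulr1.
Qed.

Lemma coord_le v i : `|v i 0| <= enorm v.
Proof.
rewrite -sqrtr_sqr /enorm ler_wsqrtr // (bigD1 i) //= lerDl.
by apply: sumr_ge0 => j _; rewrite sqr_ge0.
Qed.

Lemma opnorm_bound A x : enorm (A *m x) <= opnorm A * enorm x.
Proof.
set S := [set enorm (A *m y) | y in [set y : 'cV[R]_d | enorm y <= 1]].
have ubS : has_ubound S.
  exists (\sum_i \sum_j `|A i j|) => _ [y /= y1 <-].
  apply: le_trans (enorm_le_l1 _) _; apply: ler_sum => i _.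
  rewrite mxE; apply: le_trans (ler_norm_sum _ _ _) _.
  apply: ler_sum => j _; rewrite normrM ler_piMr //.
  exact: le_trans (coord_le _ _) y1.
have [x0|xn0] := eqVneq (enorm x) 0.
  by rewrite (enorm_eq0 x0) mulmx0 !enorm0 mulr0.
have xp : 0 < enorm x by rewrite lt_def xn0 enorm_ge0.
have : S (enorm (A *m ((enorm x)^-1 *: x))).
  exists ((enorm x)^-1 *: x) => //=.
  by rewrite enormZ ger0_norm ?invr_ge0 ?enorm_ge0 // mulVf.
move=> /(ub_le_sup ubS); rewrite -/(opnorm A) -scalemxAr enormZ.
by rewrite ger0_norm ?invr_ge0 ?enorm_ge0 // ler_pdivrMl // mulrC.
Qed.

Lemma resid_id (b x a c : 'cV[R]_d) : b + x - a = (x - c) - (a - b - c).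
Proof. by apply/matrixP => i j; rewrite !mxE; ring. Qed.

End Vec.
Section Ana.
Variables (R : realType) (d : nat).

Lemma is_derive_quad {V W : normedModType R} (f : V -> W) x v a b :
  (forall h : R, f (x + h *: v) = f x + h *: a + (h ^+ 2) *: b) ->
  is_derive x v f a.
Proof.
move=> fq.
have C1 : (fun h : R => h *: b) @ 0 --> (0 : R) *: b.
  by apply: cvgZr_tmp; exact: cvg_id.
have C : (fun h : R => a + h *: b) @ 0 --> a + (0 : R) *: b.
  by apply: cvgD => //; exact: cvg_cst.
have C2 := (@continuous_withinNx _ _ (fun h : R => a + h *: b) 0).1 C.
rewrite scale0r addr0 in C2.
have L : (fun h : R => h^-1 *: ((f \o shift x) (h *: v) - f x)) @ 0^' --> a.
  apply: cvg_trans; last exact: C2.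
  apply: near_eq_cvg; near=> h.
  have h0 : h != 0 by near: h; exact: nbhs_dnbhs_neq.
  rewrite /= [h *: v + x]addrC fq addrAC [f x + _]addrC addrK scalerDr !scalerA mulVf // scale1r.
  by rewrite expr2 mulrA mulVf // mul1r.
split; first by apply/cvg_ex; exists a.
exact: cvg_lim L.
Unshelve. all: by end_near. Qed.

Lemma is_derive_line {V W : normedModType R} (g : V -> W) x v (s : R) dg :
  is_derive (x + s *: v) v g dg -> is_derive s 1 (fun s => g (x + s *: v)) dg.
Proof.
have E : (fun h : R => h^-1 *: (((fun s => g (x + s *: v)) \o shift s) (h *: 1)
            - g (x + s *: v))) =
         (fun h : R => h^-1 *: ((g \o shift (x + s *: v)) (h *: v) - g (x + s *: v))).
  apply/funext => h /=; congr (_ *: (g _ - _)).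
  by rewrite [h *: 1]mulr1 scalerDl addrCA addrA.
case=> D1 D2; split; rewrite /derivable /derive E //.
Qed.

Lemma nonincr01 (phi dphi : R -> R) :
  (forall s : R, is_derive s (1 : R) phi (dphi s)) ->
  (forall s, 0 < s < 1 -> dphi s <= 0) -> phi 1 <= phi 0.
Proof.
move=> D N.
have cont : {within `[0, 1], continuous phi}.
  by apply: derivable_within_continuous => s _; exact: ex_derive.
have [c c01 E] := MVT ltr01 (fun s _ => D s) cont.
rewrite -subr_le0 E subr0 mulr1; apply: N.
by move: c01; rewrite in_itv.
Qed.

Lemma diff_dir (g : 'cV[R]_d -> R) p v : differentiable g p ->
  'D_v g p = \sum_j v j 0 * 'D_(ebasis R j) g p.
Proof.
move=> dg; rewrite deriveE // {1}(colE v) linear_sum.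
by apply: eq_bigr => j _; rewrite linearZ /= deriveE.
Qed.

Lemma is_derive_grad (f : 'cV[R]_d -> R) p v : differentiable f p ->
  is_derive p v f (dotv v (grad f p)).
Proof.
move=> df; split; first exact: diff_derivable.
rewrite diff_dir // dotvE; apply: eq_bigr => j _; by rewrite mxE.
Qed.

Lemma is_derive_hess (f : 'cV[R]_d -> R) p v (i : 'I_d) :
  differentiable (grad f) p ->
  is_derive p v (fun u => grad f u i 0) ((hess f p *m v) i 0).
Proof.
move=> dg.
have dc : differentiable (fun u => grad f u i 0) p.
  have -> : (fun u => grad f u i 0) = (fun M : 'cV[R]_d => M i 0) \o grad f by [].
  apply: differentiable_comp => //; exact: differentiable_coord.
split; first exact: diff_derivable.
rewrite diff_dir // mxE; apply: eq_bigr => j _; by rewrite mxE mulrC.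
Qed.

End Ana.
Section Ana2.
Variables (R : realType) (d : nat).

Lemma is_derive_add {V : normedModType R} (f g : V -> R) p v df dg :
  is_derive p v f df -> is_derive p v g dg ->
  is_derive p v (fun u => f u + g u) (df + dg).
Proof. move=> H1 H2; exact: is_deriveD. Qed.

Lemma is_derive_sub {V : normedModType R} (f g : V -> R) p v df dg :
  is_derive p v f df -> is_derive p v g dg ->
  is_derive p v (fun u => f u - g u) (df - dg).
Proof. move=> H1 H2; exact: is_deriveB. Qed.

Lemma is_derive_scal {V : normedModType R} (f : V -> R) (c : R) p v df :
  is_derive p v f df -> is_derive p v (fun u => c * f u) (c * df).
Proof. move=> H; exact: (is_deriveZ c H). Qed.

Lemma is_derive_big {V : normedModType R} (I : Type) (r : seq I) (P : pred I)
  (f : I -> V -> R) (df : I -> R) p v :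
  (forall i, P i -> is_derive p v (f i) (df i)) ->
  is_derive p v (fun u => \sum_(i <- r | P i) f i u) (\sum_(i <- r | P i) df i).
Proof.
move=> H; elim: r => [|a r IH].
  have -> : (fun u => \sum_(i <- [::] | P i) f i u) = cst 0.
    by apply/funext => u; rewrite big_nil.
  rewrite big_nil; exact: is_derive_cst.
case Pa : (P a).
  have -> : (fun u => \sum_(i <- a :: r | P i) f i u) =
            (fun u => f a u + \sum_(i <- r | P i) f i u).
    by apply/funext => u; rewrite big_cons Pa.
  rewrite big_cons Pa; apply: is_derive_add => //; exact: H.
have -> : (fun u => \sum_(i <- a :: r | P i) f i u) =
          (fun u => \sum_(i <- r | P i) f i u).
  by apply/funext => u; rewrite big_cons Pa.
by rewrite big_cons Pa.
Qed.

Lemma is_derive_dotgrad (f : 'cV[R]_d -> R) (r : 'cV[R]_d) p v :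
  differentiable (grad f) p ->
  is_derive p v (fun u => dotv r (grad f u)) (dotv r (hess f p *m v)).
Proof.
move=> dg.
have -> : (fun u => dotv r (grad f u)) = (fun u => \sum_i r i 0 * grad f u i 0).
  by apply/funext => u; rewrite dotvE.
rewrite dotvE; apply: is_derive_big => i _; apply: is_derive_scal.
exact: is_derive_hess.
Qed.

Lemma grad_of (f : 'cV[R]_d -> R) (G : 'cV[R]_d -> 'cV[R]_d) :
  (forall p v, is_derive p v f (dotv v (G p))) -> forall p, grad f p = G p.
Proof.
move=> H p; apply/matrixP => i j; rewrite (ord1 j) mxE.
by rewrite (@derive_val _ _ _ _ _ _ _ (H p (ebasis R i))) dotv_ebasis.
Qed.

Lemma descent (f : 'cV[R]_d -> R) (G : 'cV[R]_d -> 'cV[R]_d) (mu : R) x y :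
  (forall p v, is_derive p v f (dotv v (G p))) ->
  (forall p q, enorm (G p - G q) <= mu * enorm (p - q)) ->
  f y <= f x + dotv (y - x) (G x) + mu / 2 * enorm (y - x) ^+ 2.
Proof.
move=> D S; set v := y - x; set c1 := dotv v (G x); set c2 := mu / 2 * enorm v ^+ 2.
pose q := fun s : R => s * c1 + c2 * s ^+ 2.
have Dq : forall s : R, is_derive s (1 : R) q (c1 + 2 * c2 * s).
  move=> s; apply: (is_derive_quad (b:=c2)) => h.
  rewrite /q [h *: 1]mulr1 /GRing.scale /=; ring.
pose phi := fun s : R => f (x + s *: v) - q s.
have Dphi : forall s : R, is_derive s (1 : R) phi
    (dotv v (G (x + s *: v)) - (c1 + 2 * c2 * s)).
  move=> s; apply: is_derive_sub => //; apply: is_derive_line; exact: D.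
have P1 : phi 1 = f y - (c1 + c2).
  rewrite /phi /q scale1r.
  have -> : x + v = y by rewrite /v addrC subrK.
  by rewrite mul1r expr1n mulr1.
have P0 : phi 0 = f x.
  by rewrite /phi /q scale0r addr0 mul0r expr0n /= mulr0 addr0 subr0.
suff : phi 1 <= phi 0.
  by rewrite P1 P0 lerBlDr addrA.
apply: nonincr01 Dphi _.
move=> s /andP[s0 s1]; rewrite subr_le0 -lerBlDl -dotvBr.
apply: le_trans (CS _ _) _.
have E : enorm (G (x + s *: v) - G x) <= mu * (s * enorm v).
  apply: le_trans (S _ _) _.
  have -> : x + s *: v - x = s *: v by rewrite addrC addKr.
  rewrite enormZ ger0_norm //; exact: ltW.
apply: le_trans (ler_wpM2l (enorm_ge0 _) E) _.
rewrite /c2 le_eqVlt; apply/orP; left; by apply/eqP; field.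
Qed.

End Ana2.
Section Ana3.
Variables (R : realType) (d : nat).

Lemma taylor_grad (f : 'cV[R]_d -> R) (rho : R) x y :
  0 <= rho -> (forall p, differentiable (grad f) p) -> hess_lipschitz rho f ->
  enorm (grad f y - grad f x - hess f x *m (y - x)) <= rho / 2 * enorm (y - x) ^+ 2.
Proof.
move=> rho0 dg HL.
set v := y - x; set r := grad f y - grad f x - hess f x *m v.
set c1 := dotv r (hess f x *m v); set c2 := rho / 2 * enorm v ^+ 2 * enorm r.
pose q := fun s : R => s * c1 + c2 * s ^+ 2.
have Dq : forall s : R, is_derive s (1 : R) q (c1 + 2 * c2 * s).
  move=> s; apply: (is_derive_quad (b:=c2)) => h.
  rewrite /q [h *: 1]mulr1 /GRing.scale /=; ring.
pose psi := fun s : R => dotv r (grad f (x + s *: v)) - q s.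
have Dpsi : forall s : R, is_derive s (1 : R) psi
    (dotv r (hess f (x + s *: v) *m v) - (c1 + 2 * c2 * s)).
  move=> s; apply: is_derive_sub => //.
  apply: (is_derive_line (g := fun u => dotv r (grad f u))).
  exact: is_derive_dotgrad.
have P1 : psi 1 = dotv r (grad f y) - (c1 + c2).
  rewrite /psi /q scale1r.
  have -> : x + v = y by rewrite /v addrC subrK.
  by rewrite mul1r expr1n mulr1.
have P0 : psi 0 = dotv r (grad f x).
  by rewrite /psi /q scale0r addr0 mul0r expr0n /= mulr0 addr0 subr0.
have H : psi 1 <= psi 0.
  apply: nonincr01 Dpsi _.
  move=> s /andP[s0 s1]; rewrite subr_le0 -lerBlDl -dotvBr -mulmxBl.
  apply: le_trans (CS _ _) _.
  have E : enorm ((hess f (x + s *: v) - hess f x) *m v) <= rho * (s * enorm v) * enorm v.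
    apply: le_trans (opnorm_bound _ _) _; apply: ler_wpM2r; first exact: enorm_ge0.
    apply: le_trans (HL _ _) _.
    have -> : x + s *: v - x = s *: v by rewrite addrC addKr.
    by rewrite enormZ ger0_norm //; exact: ltW.
  apply: le_trans (ler_wpM2l (enorm_ge0 _) E) _.
  by rewrite /c2 le_eqVlt; apply/orP; left; apply/eqP; field.
have Hr : enorm r ^+ 2 <= rho / 2 * enorm v ^+ 2 * enorm r.
  move: H; rewrite P1 P0 enorm_sq {1}/r !dotvBr -/c1 -/c2; lra.
have [r0|rn0] := eqVneq (enorm r) 0.
  by rewrite r0 mulr_ge0 // ?sqr_ge0 // divr_ge0.
have rp : 0 < enorm r by rewrite lt_def rn0 enorm_ge0.
by move: Hr; rewrite expr2 ler_pM2r.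
Qed.

End Ana3.
Section RealAux.
Variable (R : realType).

Lemma sum_cross (a : nat -> R) (b : R) n :
  2 * (\sum_(0 <= t < n) a t) * b <= \sum_(0 <= t < n) a t ^+ 2 + n%:R * b ^+ 2.
Proof.
elim: n => [|n IH]; first by rewrite !big_geq // mul0r mulr0 mul0r addr0.
rewrite !big_nat_recr //= -natr1.
have : 2 * a n * b <= a n ^+ 2 + b ^+ 2 by have := sqr_ge0 (a n - b); nra.
nra.
Qed.

Lemma CS_sum (a : nat -> R) n :
  (\sum_(0 <= t < n) a t) ^+ 2 <= n%:R * \sum_(0 <= t < n) a t ^+ 2.
Proof.
elim: n => [|n IH]; first by rewrite !big_geq // mul0r expr0n.
rewrite !big_nat_recr //= -natr1.
have := sum_cross a (a n) n.
nra.
Qed.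

Lemma sqrt_le_of_sq (x y : R) : 0 <= y -> x ^+ 2 <= y ^+ 2 -> x <= y.
Proof.
move=> y0 H; apply: le_trans (ler_norm x) _.
by rewrite -sqrtr_sqr -(ger0_norm y0) -sqrtr_sqr ler_wsqrtr.
Qed.

End RealAux.
Section Ana4.
Variables (R : realType).

Lemma is_derive_bign {V : normedModType R} (m n : nat)
  (f : nat -> V -> R) (df : nat -> R) p v :
  (forall i, (m <= i < n)%N -> is_derive p v (f i) (df i)) ->
  is_derive p v (fun u => \sum_(m <= i < n) f i u) (\sum_(m <= i < n) df i).
Proof.
move=> H.
have E1 : (fun u => \sum_(m <= i < n) f i u) =
          (fun u => \sum_(m <= i < n | (m <= i < n)%N && true) f i u).
  by apply/funext => u; rewrite big_nat_cond.
rewrite E1 big_nat_cond; apply: is_derive_big => i /andP[Hi _]; exact: H.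
Qed.

End Ana4.

Unset Implicit Arguments.

(* Indices k range over 1..K; L k, what k, H k for k outside the relevant range are unused. *)
Theorem theorem2 (R : realType) (d K T : nat)
  (L : nat -> 'cV[R]_d -> R) (mu rho delta : R)
  (what : nat -> 'cV[R]_d) (H : nat -> 'M[R]_d)
  (W : set 'cV[R]_d) (w : nat -> 'cV[R]_d) :
  (2 <= K)%N ->
  0 < mu -> 0 <= rho -> 0 <= delta ->
  (forall k, (1 <= k <= K)%N ->
     [/\ twice_differentiable (L k), smooth_const mu (L k)
       & hess_lipschitz rho (L k)]) ->
  (forall k, (1 <= k < K)%N ->
     [/\ (H k)^T = H k, opnorm (H k) <= mu
       & opnorm (H k - hess (L k) (what k)) <= delta]) ->
  let Lt := fun v : 'cV[R]_d => \sum_(1 <= k < K)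
      (L k (what k) + dotv (v - what k) (grad (L k) (what k))
       + 2^-1 * dotv (v - what k) (H k *m (v - what k))) in
  let Ft := fun v => K%:R^-1 * (Lt v + L K v) in
  let F := fun v => K%:R^-1 * \sum_(1 <= k < K.+1) L k v in
  forall Fstar Ftstar : R,
  (exists2 ws, W ws & F ws = Fstar) -> (forall v, W v -> Fstar <= F v) ->
  (exists2 ws, W ws & Ft ws = Ftstar) -> (forall v, W v -> Ftstar <= Ft v) ->
  (0 < T)%N ->
  w 0%N = what K.-1 ->
  (forall t, w t.+1 = w t - mu^-1 *: grad Ft (w t)) ->
  (forall t, (t <= T)%N -> W (w t)) ->
  let F0 := F (w 0%N) in
  let Ft0 := Ft (w 0%N) in
  let alpha := Num.sqrt (2 * mu * (F0 - Fstar)) in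
  let beta := Num.sqrt 3 / K%:R * \sum_(1 <= k < K.-1)
      (delta * enorm (w 0%N - what k) + 2 * rho * enorm (w 0%N - what k) ^+ 2) in
  let gamma1 := delta * Num.sqrt (3 / mu * (Ft0 - Ftstar)) in
  let gamma2 := 4 * rho / mu * (Ft0 - Ftstar) in
  T%:R^-1 * \sum_(1 <= t < T.+1) enorm (grad F (w t.-1))
    <= alpha / Num.sqrt T%:R + beta + gamma1 * Num.sqrt T%:R + gamma2 * T%:R.
Proof.
move=> K2 mu0 rho0 delta0 HL HH Lt Ft F Fstar Ftstar [ws Wws Fws] Fmin
  [wt Wwt Ftws] Ftmin T0 w0 wrec Ww.
cbv zeta.
have K1 : (1 <= K)%N by apply: leq_trans K2.
have Kpos : (0 : R) < K%:R by rewrite ltr0n; apply: leq_trans K2.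
have Kn0 : K%:R != 0 :> R by rewrite gt_eqF.
have muP : 0 < mu := mu0.
have mun0 : mu != 0 by rewrite gt_eqF.
have dL : forall k, (1 <= k <= K)%N -> forall p, differentiable (L k) p.
  by move=> k /HL [[]].
have dgL : forall k, (1 <= k <= K)%N -> forall p, differentiable (grad (L k)) p.
  by move=> k /HL [[]].
pose GLt p := \sum_(1 <= k < K) (grad (L k) (what k) + H k *m (p - what k)).
pose GFt p := K%:R^-1 *: (GLt p + grad (L K) p).
pose GF p := K%:R^-1 *: \sum_(1 <= k < K.+1) grad (L k) p.
have isdF : forall p v, is_derive p v F (dotv v (GF p)).
  move=> p v; rewrite /GF dotvZr dotv_sumr; apply: is_derive_scal.
  apply: is_derive_bign => k Hk; apply: is_derive_grad; apply: dL.
  by rewrite -ltnS.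
have isdLt : forall p v, is_derive p v Lt (dotv v (GLt p)).
  move=> p v; apply: (is_derive_quad (b := \sum_(1 <= k < K) 2^-1 * dotv v (H k *m v))).
  move=> h; rewrite /Lt /GLt dotv_sumr /GRing.scale /= mulr_sumr mulr_sumr -!big_split /=.
  apply: eq_big_nat => k Hk.
  have [sH _ _] := HH k Hk.
  have -> : p + h *: v - what k = (p - what k) + h *: v by rewrite addrAC.
  set z := p - what k; clearbody z.
  rewrite mulmxDr -scalemxAr !dotvDl !dotvDr !dotvZl !dotvZr.
  rewrite (dotv_sym_mx z v sH).
  by rewrite /GRing.scale /=; field.
have isdFt : forall p v, is_derive p v Ft (dotv v (GFt p)).
  move=> p v; rewrite /GFt dotvZr dotvDr; apply: is_derive_scal.
  apply: is_derive_add; try exact: isdLt.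
  by apply: is_derive_grad; apply: dL; rewrite K1 leqnn.
have gF := grad_of isdF.
have gFt := grad_of isdFt.
have KK : (1 <= K <= K)%N by rewrite K1 leqnn.
have SFt : forall p q, enorm (GFt p - GFt q) <= mu * enorm (p - q).
  move=> p q; rewrite /GFt -scalerBr enormZ ger0_norm ?invr_ge0 ?ler0n //.
  have -> : GLt p + grad (L K) p - (GLt q + grad (L K) q) =
      \sum_(1 <= k < K) H k *m (p - q) + (grad (L K) p - grad (L K) q).
    rewrite opprD addrACA; congr (_ + _).
    rewrite /GLt -sumrB; apply: eq_bigr => k _.
    by rewrite opprD addrACA subrr add0r -mulmxBr opprB addrA subrK.
  rewrite ler_pdivrMl //.
  apply: le_trans (enormD _ _) _.
  have E1 : enorm (\sum_(1 <= k < K) H k *m (p - q)) <= (mu * enorm (p - q)) *+ (K - 1).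
    apply: le_trans (enorm_sum _ _ _) _.
    rewrite -sumr_const_nat; apply: ler_sum_nat => k Hk.
    apply: le_trans (opnorm_bound _ _) _; apply: ler_wpM2r; first exact: enorm_ge0.
    by have [_ ? _] := HH k Hk.
  have E2 : enorm (grad (L K) p - grad (L K) q) <= mu * enorm (p - q).
    by have [_ S _] := HL K KK; apply: S.
  apply: le_trans (lerD E1 E2) _.
  by rewrite -mulrSr subn1 prednK // mulr_natl.
have SF : forall p q, enorm (GF p - GF q) <= mu * enorm (p - q).
  move=> p q; rewrite /GF -scalerBr enormZ ger0_norm ?invr_ge0 ?ler0n //.
  rewrite ler_pdivrMl // -sumrB.
  apply: le_trans (enorm_sum _ _ _) _.
  have -> : K%:R * (mu * enorm (p - q)) = \sum_(1 <= k < K.+1) mu * enorm (p - q).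
    by rewrite sumr_const_nat subn1 /= mulr_natl.
  apply: ler_sum_nat => k Hk.
  by have [_ S _] := HL k (ltac:(by rewrite -ltnS)); apply: S.
pose g t := GFt (w t).
pose f t := GF (w t).
have wrec' : forall t, w t.+1 = w t - mu^-1 *: g t by move=> t; rewrite wrec gFt.
have descFt : forall t, enorm (g t) ^+ 2 <= 2 * mu * (Ft (w t) - Ft (w t.+1)).
  move=> t; have H1 := descent (w t) (w t.+1) isdFt SFt.
  move: H1; rewrite wrec' -/(g t).
  have -> : w t - mu^-1 *: g t - w t = - (mu^-1 *: g t) by rewrite addrAC subrr add0r.
  have mi0 : 0 <= mu^-1 by rewrite invr_ge0 ltW.
  rewrite dotvNl dotvZl enormN enormZ (ger0_norm mi0) -enorm_sq.
  set N := enorm (g t) ^+ 2.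
  have -> : mu / 2 * (mu^-1 * enorm (g t)) ^+ 2 = (2 * mu)^-1 * N.
    by rewrite /N; field.
  have -> : mu^-1 * N = 2 * ((2 * mu)^-1 * N) by field.
  have NM : N = 2 * mu * ((2 * mu)^-1 * N) by field.
  move=> H1; rewrite [X in X <= _]NM ler_pM2l ?mulr_gt0 //; lra.
have descF : forall t,
    enorm (f t) ^+ 2 <= 2 * mu * (F (w t) - F (w t.+1)) + enorm (g t - f t) ^+ 2.
  move=> t; have H1 := descent (w t) (w t.+1) isdF SF.
  move: H1; rewrite wrec' -/(f t).
  have -> : w t - mu^-1 *: g t - w t = - (mu^-1 *: g t) by rewrite addrAC subrr add0r.
  have mi0 : 0 <= mu^-1 by rewrite invr_ge0 ltW.
  rewrite dotvNl dotvZl enormN enormZ (ger0_norm mi0) exprMn enorm_sq.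
  rewrite !enorm_sq.
  set e := g t - f t.
  have ge : g t = f t + e by rewrite /e addrC subrK.
  clearbody e; rewrite ge.
  rewrite !dotvDl !dotvDr (dotvC e (f t)).
  set a := dotv (f t) (f t); set b := dotv (f t) e; set c := dotv e e.
  have key : - (mu^-1 * (a + b)) + mu / 2 * (mu^-1 ^+ 2 * (a + b + (b + c))) =
            - ((2 * mu)^-1 * (a - c)) by field.
  have NM : a - c = 2 * mu * ((2 * mu)^-1 * (a - c)) by field.
  move=> H1; rewrite -lerBlDr [X in X <= _]NM ler_pM2l ?mulr_gt0 //; lra.
have Fts0 : Ftstar <= Ft (w 0%N) by apply: Ftmin; apply: Ww.
have Fs0 : Fstar <= F (w 0%N) by apply: Fmin; apply: Ww.
set Dl := Ft (w 0%N) - Ftstar.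
have Dl0 : 0 <= Dl by rewrite subr_ge0.
have sumG : forall n, \sum_(0 <= t < n) enorm (g t) ^+ 2 <= 2 * mu * (Ft (w 0%N) - Ft (w n)).
  elim=> [|n IH]; first by rewrite big_geq // subrr mulr0.
  rewrite big_nat_recr //=; have := descFt n; nra.
have sumG' : forall n, (n <= T)%N -> \sum_(0 <= t < n) enorm (g t) ^+ 2 <= 2 * mu * Dl.
  move=> n Hn; have := sumG n; have := Ftmin _ (Ww n Hn); rewrite /Dl; nra.
have dist : forall n, enorm (w n - w 0%N) <= mu^-1 * \sum_(0 <= t < n) enorm (g t).
  elim=> [|n IH]; first by rewrite subrr enorm0 big_geq // mulr0.
  rewrite wrec' big_nat_recr //= mulrDr.
  have -> : w n - mu^-1 *: g n - w 0%N = (w n - w 0%N) + - (mu^-1 *: g n) by rewrite addrAC.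
  apply: le_trans (enormD _ _) _; rewrite enormN enormZ ger0_norm ?invr_ge0 ?(ltW muP) //.
  by rewrite lerD2r.
have dist2 : forall n, (n <= T)%N -> enorm (w n - w 0%N) ^+ 2 <= 2 * T%:R * Dl / mu.
  move=> n Hn; have h1 := dist n; have h2 := CS_sum (fun t => enorm (g t)) n.
  have h3 := sumG' n Hn; move: h1 h2 h3.
  set S := \sum_(0 <= t < n) enorm (g t); set Q := \sum_(0 <= t < n) enorm (g t) ^+ 2.
  move=> h1 h2 h3.
  have S0 : 0 <= S by apply: sumr_ge0 => i _; exact: enorm_ge0.
  have hn : n%:R <= T%:R :> R by rewrite ler_nat.
  have mi0 : 0 < mu^-1 by rewrite invr_gt0.
  have a1 : enorm (w n - w 0%N) ^+ 2 <= (mu^-1 * S) ^+ 2.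
    have := enorm_ge0 (w n - w 0%N); nra.
  apply: le_trans a1 _; rewrite exprMn.
  have a2 : S ^+ 2 <= T%:R * (2 * mu * Dl).
    apply: le_trans h2 _; apply: le_trans (ler_wpM2l (ler0n _ _) h3) _.
    by apply: ler_wpM2r => //; rewrite mulr_ge0 // mulr_ge0 // ltW.
  apply: le_trans (ler_wpM2l (sqr_ge0 _) a2) _.
  by rewrite le_eqVlt; apply/orP; left; apply/eqP; field.
set Dm := Num.sqrt (2 * T%:R * Dl / mu).
have distD : forall n, (n <= T)%N -> enorm (w n - w 0%N) <= Dm.
  move=> n Hn; apply: sqrt_le_of_sq; first exact: sqrtr_ge0.
  rewrite /Dm [X in _ <= X]sqr_sqrtr; first exact: (dist2 n Hn).
  by rewrite divr_ge0 ?(ltW muP) // mulr_ge0 // mulr_ge0.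
pose ak k := enorm (w 0%N - what k).
have rk : forall t k, (t <= T)%N -> (1 <= k < K)%N ->
   enorm (grad (L k) (what k) + H k *m (w t - what k) - grad (L k) (w t))
     <= (delta * ak k + rho * ak k ^+ 2) + (delta * Dm + rho * Dm ^+ 2).
  move=> t k Ht Hk.
  have [sH Hn Hd] := HH k Hk.
  have Hk' : (1 <= k <= K)%N by case/andP: Hk => -> /ltnW.
  have [[_ dg] _ HLip] := HL k Hk'.
  set z := w t - what k.
  rewrite (resid_id _ _ _ (hess (L k) (what k) *m z)) -mulmxBl.
  apply: le_trans (enormD _ _) _; rewrite enormN.
  have e1 : enorm ((H k - hess (L k) (what k)) *m z) <= delta * enorm z.
    apply: le_trans (opnorm_bound _ _) _; apply: ler_wpM2r => //; exact: enorm_ge0.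
  have e2 := taylor_grad (what k) (w t) rho0 dg HLip.
  rewrite -/z in e2.
  have ez : enorm z <= ak k + Dm.
    have -> : z = (w t - w 0%N) + (w 0%N - what k) by rewrite /z addrA subrK.
    by apply: le_trans (enormD _ _) _; rewrite addrC lerD2l distD.
  have a0 : 0 <= ak k by exact: enorm_ge0.
  have D0 : 0 <= Dm by exact: sqrtr_ge0.
  have z0 : 0 <= enorm z by exact: enorm_ge0.
  have zz : enorm z ^+ 2 <= (ak k + Dm) ^+ 2.
    by rewrite ler_sqr ?nnegrE // addr_ge0.
  have z2 : enorm z ^+ 2 <= 2 * (ak k ^+ 2 + Dm ^+ 2).
    move: zz; have := sqr_ge0 (ak k - Dm); rewrite sqrrB sqrrD; lra.
  have e3 : rho / 2 * enorm z ^+ 2 <= rho * (ak k ^+ 2 + Dm ^+ 2).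
    have := ler_wpM2l rho0 z2; nra.
  have e4 : delta * enorm z <= delta * (ak k + Dm) by apply: ler_wpM2l.
  lra.
set sT := Num.sqrt T%:R.
set bet := Num.sqrt 3 / K%:R * \sum_(1 <= k < K.-1) _.
set gam1 := delta * Num.sqrt (3 / mu * Dl).
set gam2 := 4 * rho / mu * Dl.
set B := bet + gam1 * sT + gam2 * T%:R.
have Err : forall t, (t <= T)%N -> enorm (g t - f t) <= B.
  move=> t Ht.
  have eq : g t - f t = K%:R^-1 *: \sum_(1 <= k < K)
      (grad (L k) (what k) + H k *m (w t - what k) - grad (L k) (w t)).
    rewrite /g /f /GFt /GF -scalerBr big_nat_recr //=; congr (_ *: _).
    by rewrite opprD addrACA subrr addr0 /GLt -sumrB.
  rewrite eq enormZ ger0_norm ?invr_ge0 ?ler0n //.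
  set E := delta * Dm + rho * Dm ^+ 2.
  have s1 : enorm (\sum_(1 <= k < K)
      (grad (L k) (what k) + H k *m (w t - what k) - grad (L k) (w t)))
      <= \sum_(1 <= k < K) ((delta * ak k + rho * ak k ^+ 2) + E).
    apply: le_trans (enorm_sum _ _ _) _; apply: ler_sum_nat => k Hk; exact: rk.
  rewrite [X in _ <= X]big_split sumr_const_nat /= in s1.
  have KK1 : K = (K.-1).+1 by rewrite prednK.
  have K11 : (1 <= K.-1)%N by rewrite -ltnS -KK1.
  have sc : \sum_(1 <= k < K) (delta * ak k + rho * ak k ^+ 2)
          = \sum_(1 <= k < K.-1) (delta * ak k + rho * ak k ^+ 2).
    rewrite {1}KK1 big_nat_recr //=.
    by rewrite /ak -w0 subrr enorm0 mulr0 expr0n /= mulr0 !addr0.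
  rewrite sc in s1.
  set C := \sum_(1 <= k < K.-1) (delta * ak k + rho * ak k ^+ 2) in s1.
  set X := enorm _ in s1 *.
  have Ki0 : 0 <= K%:R^-1 :> R by rewrite invr_ge0 ler0n.
  have D0 : 0 <= Dm by exact: sqrtr_ge0.
  have E0 : 0 <= E by rewrite /E addr_ge0 // mulr_ge0 // sqr_ge0.
  have h1 : K%:R^-1 * X <= K%:R^-1 * C + K%:R^-1 * (E *+ (K - 1)).
    by rewrite -mulrDr; apply: ler_wpM2l.
  have h3 : K%:R^-1 * (E *+ (K - 1)) <= E.
    rewrite -[E *+ _]mulr_natl.
    have HK : (K - 1)%:R <= K%:R :> R by rewrite ler_nat leq_subr.
    apply: le_trans (ler_wpM2l Ki0 (ler_wpM2r E0 HK)) _.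
    by rewrite mulrA mulVf // mul1r.
  have h4 : K%:R^-1 * C <= bet.
    rewrite /bet /C; set C2 := \sum_(1 <= k < K.-1) _.
    have CC : \sum_(1 <= k < K.-1) (delta * ak k + rho * ak k ^+ 2) <= C2.
      apply: ler_sum_nat => k _; rewrite /ak.
      have := mulr_ge0 rho0 (sqr_ge0 (enorm (w 0%N - what k))); lra.
    have C20 : 0 <= C2.
      apply: sumr_ge0 => k _; rewrite addr_ge0 // ?mulr_ge0 // ?enorm_ge0 // sqr_ge0.
    have s3 : 1 <= Num.sqrt 3 :> R.
      by rewrite -[X in X <= _]sqrtr1 ler_wsqrtr // ler1n.
    apply: le_trans (ler_wpM2l Ki0 CC) _.
    by rewrite -mulrA ler_peMl // mulr_ge0.
  have h5 : E <= gam1 * sT + gam2 * T%:R.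
    have q0 : 0 <= 3 / mu * Dl by rewrite mulr_ge0 // divr_ge0 // ltW.
    have dm1 : Dm <= Num.sqrt (3 / mu * Dl) * sT.
      rewrite /sT -sqrtrM // ler_wsqrtr //.
      rewrite -subr_ge0.
      have -> : 3 / mu * Dl * T%:R - 2 * T%:R * Dl / mu = T%:R * Dl / mu by field.
      by rewrite divr_ge0 ?mulr_ge0 // ltW.
    have dm2 : Dm ^+ 2 = 2 * T%:R * Dl / mu.
      by rewrite sqr_sqrtr // divr_ge0 ?mulr_ge0 // ltW.
    have e1 : delta * Dm <= gam1 * sT by rewrite /gam1 -mulrA; apply: ler_wpM2l.
    have e2 : rho * Dm ^+ 2 <= gam2 * T%:R.
      rewrite dm2 /gam2 -subr_ge0.
      have -> : 4 * rho / mu * Dl * T%:R - rho * (2 * T%:R * Dl / mu) =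
                2 * rho * T%:R * Dl / mu by field.
      by rewrite divr_ge0 ?mulr_ge0 // ltW.
    rewrite /E; lra.
  rewrite /B; lra.
have sumF : forall n, \sum_(0 <= t < n) enorm (f t) ^+ 2 <=
    2 * mu * (F (w 0%N) - F (w n)) + \sum_(0 <= t < n) enorm (g t - f t) ^+ 2.
  elim=> [|n IH]; first by rewrite !big_geq // subrr mulr0 addr0.
  rewrite !big_nat_recr //=; have := descF n; nra.
have B0 : 0 <= B by apply: le_trans (Err 0%N (leq0n T)); exact: enorm_ge0.
have sumE : \sum_(0 <= t < T) enorm (g t - f t) ^+ 2 <= T%:R * B ^+ 2.
  have -> : T%:R * B ^+ 2 = \sum_(0 <= t < T) B ^+ 2 by rewrite sumr_const_nat subn0 mulr_natl.
  apply: ler_sum_nat => t /andP[_ Ht].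
  by rewrite ler_sqr ?nnegrE ?enorm_ge0 //; apply: Err; apply: ltnW.
have Qb : \sum_(0 <= t < T) enorm (f t) ^+ 2 <= 2 * mu * (F (w 0%N) - Fstar) + T%:R * B ^+ 2.
  have := sumF T; have := Fmin _ (Ww T (leqnn T)); nra.
have -> : \sum_(1 <= t < T.+1) enorm (grad F (w t.-1)) = \sum_(0 <= t < T) enorm (f t).
  by rewrite big_add1 /=; apply: eq_bigr => t _; rewrite gF.
set S := \sum_(0 <= t < T) enorm (f t).
set Q := \sum_(0 <= t < T) enorm (f t) ^+ 2 in Qb.
have SQ : S ^+ 2 <= T%:R * Q by exact: (CS_sum (fun t => enorm (f t)) T).
set al := Num.sqrt (2 * mu * (F (w 0%N) - Fstar)).
have al0 : 0 <= al by exact: sqrtr_ge0.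
have al2 : al ^+ 2 = 2 * mu * (F (w 0%N) - Fstar).
  by rewrite sqr_sqrtr // mulr_ge0 ?subr_ge0 // mulr_ge0 // ltW.
have Tp : (0 : R) < T%:R by rewrite ltr0n.
have sT0 : 0 < sT by rewrite sqrtr_gt0.
have sT2 : sT ^+ 2 = T%:R by rewrite sqr_sqrtr // ltW.
have Sb : S <= al * sT + B * T%:R.
  apply: sqrt_le_of_sq; first by rewrite addr_ge0 // mulr_ge0 // ?ltW.
  have -> : (al * sT + B * T%:R) ^+ 2 = T%:R * (al ^+ 2 + T%:R * B ^+ 2) + 2 * al * B * sT * T%:R.
    by rewrite sqrrD exprMn sT2 exprMn; ring.
  have : 0 <= 2 * al * B * sT * T%:R by rewrite !mulr_ge0 // ltW.
  have : T%:R * Q <= T%:R * (al ^+ 2 + T%:R * B ^+ 2) by rewrite al2; apply: ler_wpM2l => //; exact: ltW.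
  lra.
have -> : al / sT + bet + gam1 * sT + gam2 * T%:R = T%:R^-1 * (al * sT + B * T%:R).
  rewrite /B -sT2; field; by rewrite gt_eqF.
by apply: ler_wpM2l => //; rewrite invr_ge0 ltW.
Qed.
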